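(* Suppose $F(i)=(i+1/2)^a$ on $[-1/2,1/2]$ for some $a>0$, and $q_1=q_2=Q$. Then for every threshold $R\in(0,1)$: (i) $\Delta_S^B=0$ if $a=1$; (ii) $\Delta_S^B<0$ if $a>1$; (iii) $\Delta_S^B>0$ if $a<1$.
   Context: Setting. Consumer types are $i\in[-1/2,1/2]$ with cumulative distribution function $F$. A product has a quality vector $(Q_1,Q_2)\in\{0,1\}^2$; a type-$i$ consumer gets payoff $(1/2+i)Q_1+(1/2-i)Q_2$. The versions $(1,1),(1,0),(0,1),(0,0)$ have prior probabilities $q_H,q_1,q_2,q_L$, all strictly positive and summing to $1$. Given a threshold $R\in(0,1)$, a sender with type drawn from $F$ gives a buy recommendation if her payoff from the product is at least $R$. Let $\phi_1(R)=1-F(R-1/2)$, $\phi_2(R)=F(1/2-R)$, $\pi^B=q_H+q_1\phi_1(R)+q_2\phi_2(R)$, and posteriors after a buy recommendation $p^B_1=q_1\phi_1(R)/\pi^B$, $p^B_2=q_2\phi_2(R)/\pi^B$. The subjective effect of the buy recommendation is $\Delta_S^B=(p_2^B-q_2)-(p_1^B-q_1)$. *)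

(* Defs.v *)
From Stdlib Require Import Reals.
Open Scope R_scope.

Definition Fpow (a : R) (i : R) : R :=
  if Rle_dec (i + /2) 0 then 0 else Rpower (i + /2) a.

Definition phi1 (F : R -> R) (R0 : R) : R := 1 - F (R0 - /2).
Definition phi2 (F : R -> R) (R0 : R) : R := F (/2 - R0).

Definition piB (F : R -> R) (qH q1 q2 : R) (R0 : R) : R :=
  qH + q1 * phi1 F R0 + q2 * phi2 F R0.

Definition pB1 (F : R -> R) (qH q1 q2 : R) (R0 : R) : R :=
  q1 * phi1 F R0 / piB F qH q1 q2 R0.
Definition pB2 (F : R -> R) (qH q1 q2 : R) (R0 : R) : R :=
  q2 * phi2 F R0 / piB F qH q1 q2 R0.

Definition DeltaSB (F : R -> R) (qH q1 q2 : R) (R0 : R) : R :=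
  (pB2 F qH q1 q2 R0 - q2) - (pB1 F qH q1 q2 R0 - q1).

(* Main.v *)
Require Import Defs.
From Stdlib Require Import Reals Lra.
Open Scope R_scope.


Lemma pw_lt (x a : R) : 0 < x < 1 -> 1 < a -> Rpower x a < x.
Proof.
  intros [h0 h1] ha.
  assert (hl : ln x < 0) by (rewrite <- ln_1; apply ln_increasing; lra).
  unfold Rpower. rewrite <- (exp_ln x h0) at 2. apply exp_increasing; nra.
Qed.

Lemma pw_gt (x a : R) : 0 < x < 1 -> 0 < a < 1 -> x < Rpower x a.
Proof.
  intros [h0 h1] ha.
  assert (hl : ln x < 0) by (rewrite <- ln_1; apply ln_increasing; lra).
  unfold Rpower. rewrite <- (exp_ln x h0) at 1. apply exp_increasing; nra.
Qed.

Lemma pw_lt1 (x a : R) : 0 < x < 1 -> 0 < a -> Rpower x a < 1.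
Proof.
  intros [h0 h1] ha.
  assert (hl : ln x < 0) by (rewrite <- ln_1; apply ln_increasing; lra).
  unfold Rpower. rewrite <- exp_0. apply exp_increasing; nra.
Qed.

Theorem corollary2 (a qH q1 q2 qL Q : R) :
  0 < a ->
  0 < qH -> 0 < q1 -> 0 < q2 -> 0 < qL ->
  qH + q1 + q2 + qL = 1 ->
  q1 = Q -> q2 = Q ->
  forall R0 : R, 0 < R0 < 1 ->
    (a = 1 -> DeltaSB (Fpow a) qH q1 q2 R0 = 0) /\
    (1 < a -> DeltaSB (Fpow a) qH q1 q2 R0 < 0) /\
    (a < 1 -> 0 < DeltaSB (Fpow a) qH q1 q2 R0).
Proof.
  intros ha hH h1 h2 hL hs e1 e2 R0 hR. subst q1 q2.
  assert (E1 : Fpow a (R0 - /2) = Rpower R0 a).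
  { unfold Fpow. destruct (Rle_dec (R0 - /2 + /2) 0); [lra|].
    f_equal; lra. }
  assert (E2 : Fpow a (/2 - R0) = Rpower (1 - R0) a).
  { unfold Fpow. destruct (Rle_dec (/2 - R0 + /2) 0); [lra|].
    f_equal; lra. }
  set (u := Rpower R0 a). set (v := Rpower (1 - R0) a).
  assert (hu : 0 < u) by (unfold u, Rpower; apply exp_pos).
  assert (hv : 0 < v) by (unfold v, Rpower; apply exp_pos).
  assert (hu1 : u < 1) by (apply pw_lt1; lra).
  assert (hpi : 0 < piB (Fpow a) qH Q Q R0).
  { unfold piB, phi1, phi2. rewrite E1, E2. fold u v. nra. }
  assert (D : DeltaSB (Fpow a) qH Q Q R0 =
              Q * (v + u - 1) / piB (Fpow a) qH Q Q R0).
  { unfold DeltaSB, pB1, pB2. unfold phi1, phi2. rewrite E1, E2. fold u v.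
    field. lra. }
  rewrite D. split; [|split]; intros h.
  - subst a. unfold u, v. rewrite !Rpower_1 by lra.
    replace (1 - R0 + R0 - 1) with 0 by ring. unfold Rdiv; ring.
  - assert (u < R0) by (apply pw_lt; lra).
    assert (v < 1 - R0) by (apply pw_lt; lra).
    unfold Rdiv. apply Rmult_neg_pos; [nra|]. apply Rinv_0_lt_compat; lra.
  - assert (R0 < u) by (apply pw_gt; lra).
    assert (1 - R0 < v) by (apply pw_gt; lra).
    unfold Rdiv. apply Rmult_lt_0_compat; [nra|]. apply Rinv_0_lt_compat; lra.
Qed.
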